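(* Let $X$ be a finite set. For every preference relation $\trianglerighteq$ over $2^X$ there exist a state space $S=S^+\cup S^-$ with $S^+\cap S^-=\emptyset$ and $|S|\le 2(2^{|X|}-1)$, and a function $U:X\times S\to\mathbb{R}$, such that $$V(A)=\sum_{s\in S^+}\max_{a\in A} U(a,s)-\sum_{s\in S^-}\max_{a\in A} U(a,s)$$ represents $\trianglerighteq$, i.e. $A\trianglerighteq B$ if and only if $V(A)\ge V(B)$.
   Context: A preference relation over $2^X$ (the set of menus) is a complete and transitive binary relation on $2^X$. *)

(* Defs.v *)
From mathcomp Require Import all_boot all_order all_algebra.
Set Implicit Arguments. Unset Strict Implicit. Unset Printing Implicit Defensive.
Import Order.TTheory GRing.Theory Num.Theory.
Local Open Scope ring_scope.

(* Menus are the nonempty subsets of X (max over the empty set is undefined). *)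
Definition menu (X : finType) (A : {set X}) : Prop := A != set0.

Definition is_preference (X : finType) (pref : {set X} -> {set X} -> Prop) : Prop :=
  (forall A B, menu A -> menu B -> pref A B \/ pref B A) /\
  (forall A B C, menu A -> menu B -> menu C -> pref A B -> pref B C -> pref A C).

(* max_{a in A} f a for a nonempty A (arbitrary value 0 on the empty set). *)
Definition setmax (R : realFieldType) (X : finType) (f : X -> R) (A : {set X}) : R :=
  match [pick a in A] with
  | Some a0 => \big[Num.max/f a0]_(a in A) f a
  | None => 0
  end.

Definition Vrep (R : realFieldType) (X S : finType) (Splus : {set S})
  (U : X -> S -> R) (A : {set X}) : R :=
  \sum_(s in Splus) setmax (fun a => U a s) A
  - \sum_(s in ~: Splus) setmax (fun a => U a s) A.

(* Main.v *)
Require Import Defs.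
From mathcomp Require Import all_boot all_order all_algebra.
From Stdlib Require Import Classical ClassicalEpsilon.
From mathcomp Require Import zify.
Import Order.TTheory GRing.Theory Num.Theory.
Local Open Scope ring_scope.

Section Aux.
Variable R : realFieldType.
Variable X : finType.

Lemma setmax_ind (T A : {set X}) (k : R) : k <= 0 -> A != set0 ->
  setmax (fun a => if a \in T then k else 0) A = if A \subset T then k else 0.
Proof.
move=> k0 An0; rewrite /setmax.
case: pickP => [a0 a0A|]; last first.
  move=> H; case/set0Pn: An0 => x xA; by rewrite H in xA.
set f := fun a => if a \in T then k else 0.
have Hin : exists2 a, a \in A & \big[Num.max/f a0]_(a in A) f a = f a.
  elim/big_ind: _ => [|x y [a aA ->] [b bA ->]|a aA].
  - by exists a0.
  - by case: (leP (f a) (f b)) => _; [exists b|exists a].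
  - by exists a.
have Hub : forall b, b \in A -> f b <= \big[Num.max/f a0]_(a in A) f a.
  by move=> b bA; rewrite (bigD1 b) //= le_max lexx.
case: Hin => a aA Ebig; rewrite Ebig.
case: ifP => [/subsetP sAT|].
  by rewrite /f sAT.
move/negbT/subsetPn => [b bA bT].
have Hb := Hub b bA; rewrite Ebig /f (negbTE bT) in Hb.
move: Hb; rewrite /f; case: (a \in T) => // H.
by apply/eqP; rewrite eq_le H k0.
Qed.

Lemma mobius_exists (g : {set X} -> R) :
  exists c : {set X} -> R, forall A : {set X}, \sum_(T : {set X} | A \subset T) c T = g A.
Proof.
suff: forall k, exists c : {set X} -> R, forall A : {set X},
    (#|X| < #|A| + k)%N -> \sum_(T : {set X} | A \subset T) c T = g A.
  move=> /(_ #|X|.+1) [c Hc]; exists c => A; apply: Hc.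
  have HAc : (#|A| <= #|X|)%N by apply: max_card.
  lia.
elim=> [|k [c Hc]].
  exists (fun _ => 0) => A; have HAc : (#|A| <= #|X|)%N by apply: max_card.
  lia.
exists (fun T : {set X} => if (#|T| + k == #|X|)%N
         then g T - \sum_(T' : {set X} | T \proper T') c T' else c T) => A HA.
have Hsame : forall T : {set X}, (#|X| < #|T| + k)%N ->
   (if (#|T| + k == #|X|)%N
         then g T - \sum_(T' : {set X} | T \proper T') c T' else c T) = c T.
  by move=> T HT; rewrite ifN //; apply/negP => /eqP; lia.
case: (ltnP #|X| (#|A| + k)) => HA'.
  rewrite -Hc //; apply: eq_bigr => T /subset_leq_card HT.
  apply: Hsame; lia.
have E : (#|A| + k)%N = #|X| by lia.
rewrite (bigD1 A) //= E eqxx.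
have -> : \sum_(i : {set X} | (A \subset i) && (i != A))
     (if (#|i| + k)%N == #|X|
      then g i - \sum_(T' : {set X} | i \proper T') c T'
      else c i) = \sum_(T' : {set X} | A \proper T') c T'.
  apply: eq_big => T; first by rewrite properEneq andbC eq_sym.
  move=> /andP [AT TA]; apply: Hsame.
  have : A \proper T by rewrite properEneq eq_sym TA AT.
  move/proper_card; lia.
by rewrite subrK.
Qed.

End Aux.

Theorem corollary7 (R : realFieldType) (X : finType)
  (pref : {set X} -> {set X} -> Prop) :
  is_preference pref ->
  exists (S : finType) (Splus : {set S}) (U : X -> S -> R),
    (#|S| <= 2 * (2 ^ #|X| - 1))%N /\
    forall A B : {set X}, menu A -> menu B ->
      (pref A B <-> Vrep Splus U B <= Vrep Splus U A).
Proof.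
move=> [Hcomp Htrans].
pose prefb A B := if excluded_middle_informative (pref A B) then true else false.
have prefbP : forall A B, reflect (pref A B) (prefb A B).
  move=> A B; rewrite /prefb; case: excluded_middle_informative => H.
    by constructor. by constructor.
pose low A := [set B | (B != set0) && prefb A B].
pose v A : R := (#|low A|)%:R.
have Hv : forall A B, menu A -> menu B -> (pref A B <-> v B <= v A).
  move=> A B mA mB; rewrite /v ler_nat; split.
    move=> pAB; apply: subset_leq_card; apply/subsetP => C.
    rewrite !inE => /andP [C0 /prefbP pBC]; rewrite C0 /=.
    by apply/prefbP; apply: (Htrans A B C).
  move=> Hle; case: (classic (pref A B)) => // nAB.
  have pBA : pref B A by case: (Hcomp A B mA mB).
  have : low A \proper low B.
    rewrite properE; apply/andP; split.
      apply/subsetP => C; rewrite !inE => /andP [C0 /prefbP pAC].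
      by rewrite C0 /=; apply/prefbP; apply: (Htrans B A C).
    apply/subsetPn; exists B.
      rewrite inE mB /=; apply/prefbP; by case: (Hcomp B B mB mB).
    by rewrite inE mB /=; apply/prefbP.
  by move/proper_card; rewrite ltnNge Hle.
have [c Hc] := @mobius_exists R X (fun A => - v A).
pose NE := [set~ (set0 : {set X})].
pose S := {T : {set X} | T \in NE}.
pose Splus := [set s : S | 0 <= c (val s)].
pose U := fun (a : X) (s : S) => if a \in val s then - `|c (val s)| else 0.
exists S, Splus, U; split.
  rewrite card_sig.
  have -> : #|[pred x | x \in NE]| = #|NE| by apply: eq_card.
  rewrite cardsC1 -cardsT -powersetT card_powerset cardsT subn1.
  lia.
have HV : forall A, menu A -> Vrep Splus U A = v A.
  move=> A mA; rewrite /Vrep.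
  have Hm : forall s : S, setmax (fun a => U a s) A
       = if A \subset val s then - `|c (val s)| else 0.
    move=> s; rewrite /U setmax_ind //; by rewrite oppr_le0 normr_ge0.
  pose w (s : S) := if A \subset val s then - c (val s) else 0.
  rewrite (eq_bigr w); last first.
    move=> s; rewrite inE Hm /w => H; by rewrite ger0_norm.
  rewrite [X in _ - X](eq_bigr (fun s => - w s)); last first.
    move=> s; rewrite !inE Hm /w => H; rewrite ltr0_norm ?ltNge //.
    by case: ifP; rewrite ?opprK ?oppr0.
  rewrite sumrN opprK.
  have -> : \sum_(i in Splus) w i + \sum_(i in ~: Splus) w i = \sum_i w i.
    by rewrite [RHS](bigID (mem Splus)) /=; congr (_ + _); apply: eq_bigl => s; rewrite !inE.
  rewrite /w -big_mkcond /=.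
  have -> : \sum_(i : S | A \subset val i) - c (val i)
            = \sum_(T in NE | A \subset T) - c T.
    by rewrite (big_sub_cond (mem NE) (fun T => A \subset T)).
  rewrite sumrN (eq_bigl (fun T : {set X} => A \subset T)).
    by rewrite Hc opprK.
  move=> T; rewrite !inE; case: (boolP (A \subset T)) => AT; last by rewrite andbF.
  rewrite andbT; apply/negP => /eqP T0; move: AT; rewrite T0 subset0.
  by move/eqP: mA; rewrite /menu => ? /eqP.
move=> A B mA mB; rewrite !HV //; exact: Hv.
Qed.
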